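(* Let $U_e=U_f=U\ge0$, $\beta<-2$, $\kappa_g\ge16$, $\alpha\le 2\min\{\beta,-3\}-1$, and let $g$ be the deterministic source. Let $V_k,W_k$ ($k\ne0$) be any complex numbers with $|V_k|,|W_k|\le\Xi$, $V_{-k}=\overline{V_k}$, $W_{-k}=\overline{W_k}$, and define $$\vartheta_k:=i|k|^{-2}\sum_{j\notin\{0,k\}}|k-j|^\beta\gamma_j\,U\big[(e_{k-j}\cdot j)V_{k-j}+(f_{k-j}\cdot j)W_{k-j}\big].$$ Then there is a constant $C<\infty$ depending only on $(\gamma_k)$, $c_g$, $\kappa_g$, $\alpha$, $\beta$ such that for all $k\ne0$, $$|\vartheta_k|\le C\,U\Xi\,|k|^{-2}K_\beta(|k|),\qquad K_\beta(s):=\min\{1,(s/(2\kappa_g))^{\beta}\}.$$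
   Context: Craya–Herring basis: for $k=(k_x,k_y,k_z)\in\mathbb Z^3$ with $|k_h|:=\sqrt{k_x^2+k_y^2}>0$, $e_k=(k_y,-k_x,0)/|k_h|$, $f_k=(k_xk_z,k_yk_z,-|k_h|^2)/(|k||k_h|)$; for $k\ne0$ on the $z$-axis, a fixed orthonormal pair of unit vectors orthogonal to $k$. Source coefficients: complex $\gamma_k$ ($k\in\mathbb Z^3\setminus\{0\}$), $\gamma_{-k}=\overline{\gamma_k}$, with constants $c_g\ge0$, $\kappa_g>1$, $\alpha<0$ such that $|\gamma_k|\le c_g|k|^\alpha$ for $|k|\ge\kappa_g$ (the deterministic source is $\Delta^{-1}g=\sum_{k\ne0}\gamma_ke^{ik\cdot x}$ on $[0,2\pi]^3$, and $\vartheta=-\Delta^{-1}(u\cdot\nabla\Delta^{-1}g)$ for $u=\sum_{k\ne0}|k|^\beta U[e_kV_k+f_kW_k]e^{ik\cdot x}$). *)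

(* Defs.v *)
From Stdlib Require Import Reals ZArith List.
From Coquelicot Require Import Coquelicot.
Import ListNotations.
Open Scope R_scope.

Definition Z3 := (Z * Z * Z)%type.
Definition zx (k : Z3) : Z := fst (fst k).
Definition zy (k : Z3) : Z := snd (fst k).
Definition zz (k : Z3) : Z := snd k.
Definition z3 (a b c : Z) : Z3 := (a, b, c).
Definition Z3zero : Z3 := z3 0 0 0.
Definition Z3neg (k : Z3) : Z3 := z3 (- zx k) (- zy k) (- zz k).
Definition Z3sub (k j : Z3) : Z3 := z3 (zx k - zx j) (zy k - zy j) (zz k - zz j).
Definition Z3eqb (k j : Z3) : bool :=
  (Z.eqb (zx k) (zx j) && Z.eqb (zy k) (zy j) && Z.eqb (zz k) (zz j))%bool.

Definition knorm (k : Z3) : R :=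
  sqrt (IZR (zx k) ^ 2 + IZR (zy k) ^ 2 + IZR (zz k) ^ 2).
Definition khnorm (k : Z3) : R := sqrt (IZR (zx k) ^ 2 + IZR (zy k) ^ 2).

Definition vec := (R * R * R)%type.
Definition vx (v : vec) : R := fst (fst v).
Definition vy (v : vec) : R := snd (fst v).
Definition vz (v : vec) : R := snd v.
Definition vdot (v w : vec) : R := vx v * vx w + vy v * vy w + vz v * vz w.
Definition vdotZ (v : vec) (j : Z3) : R :=
  vx v * IZR (zx j) + vy v * IZR (zy j) + vz v * IZR (zz j).

(* The fixed orthonormal pair used for k = (0,0,kz) on the z-axis:
   ez kz, fz kz are unit vectors, mutually orthogonal, orthogonal to (0,0,1)
   (hence to k). *)
Definition valid_axis_basis (ez fz : Z -> vec) : Prop :=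
  forall kz : Z,
    vdot (ez kz) (ez kz) = 1 /\ vdot (fz kz) (fz kz) = 1 /\
    vdot (ez kz) (fz kz) = 0 /\ vz (ez kz) = 0 /\ vz (fz kz) = 0.

Definition on_z_axis (k : Z3) : bool :=
  (Z.eqb (zx k) 0 && Z.eqb (zy k) 0)%bool.

Definition e_vec (ez : Z -> vec) (k : Z3) : vec :=
  if on_z_axis k then ez (zz k)
  else (IZR (zy k) / khnorm k, - IZR (zx k) / khnorm k, 0).
Definition f_vec (fz : Z -> vec) (k : Z3) : vec :=
  if on_z_axis k then fz (zz k)
  else (IZR (zx k) * IZR (zz k) / (knorm k * khnorm k),
        IZR (zy k) * IZR (zz k) / (knorm k * khnorm k),
        - (khnorm k ^ 2) / (knorm k * khnorm k)).

Definition zrange (N : nat) : list Z :=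
  map (fun n => (Z.of_nat n - Z.of_nat N)%Z) (seq 0 (2 * N + 1)).
Definition box (N : nat) : list Z3 :=
  list_prod (list_prod (zrange N) (zrange N)) (zrange N).

Definition Csum (l : list C) : C := fold_right Cplus (RtoC 0) l.

Definition theta_term (ez fz : Z -> vec) (gamma V W : Z3 -> C)
    (beta U : R) (k j : Z3) : C :=
  let m := Z3sub k j in
  RtoC (Rpower (knorm m) beta) * gamma j * RtoC U *
  (RtoC (vdotZ (e_vec ez m) j) * V m + RtoC (vdotZ (f_vec fz m) j) * W m).

Definition theta_partial (ez fz : Z -> vec) (gamma V W : Z3 -> C)
    (beta U : R) (k : Z3) (N : nat) : C :=
  Ci * RtoC (/ (knorm k ^ 2)) *
  Csum (map (theta_term ez fz gamma V W beta U k)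
          (filter (fun j => negb (Z3eqb j Z3zero) && negb (Z3eqb j k))%bool
             (box N))).

Definition Kbeta (kappa beta s : R) : R := Rmin 1 (Rpower (s / (2 * kappa)) beta).

(* Main.v *)
Require Import Defs.
From Stdlib Require Import Reals ZArith List Lra Lia Psatz.
From Coquelicot Require Import Coquelicot.
Open Scope R_scope.

Definition Rsum (l : list R) : R := fold_right Rplus 0 l.

Lemma Rsum_app (l1 l2 : list R) : Rsum (l1 ++ l2) = Rsum l1 + Rsum l2.
Proof. induction l1; simpl; [lra| rewrite IHl1; lra]. Qed.

Lemma Rsum_nonneg {A} (g : A -> R) l : (forall x, 0 <= g x) -> 0 <= Rsum (map g l).
Proof. intros H; induction l; simpl; [lra| specialize (H a); lra]. Qed.

Lemma Rsum_le {A} (f g : A -> R) l : (forall x, In x l -> f x <= g x) ->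
  Rsum (map f l) <= Rsum (map g l).
Proof.
  induction l; simpl; intros H; [lra|].
  assert (f a <= g a) by (apply H; auto).
  assert (Rsum (map f l) <= Rsum (map g l)) by (apply IHl; auto). lra.
Qed.

Lemma Rsum_filter {A} (g : A -> R) P l : (forall x, 0 <= g x) ->
  Rsum (map g (filter P l)) <= Rsum (map g l).
Proof.
  intros H; induction l; simpl; [lra|].
  destruct (P a); simpl; specialize (H a); lra.
Qed.

Lemma Rsum_elem {A} (g : A -> R) l x : (forall x, 0 <= g x) -> In x l ->
  g x <= Rsum (map g l).
Proof.
  intros H; induction l; simpl; [tauto|]. intros [->|Hi].
  - pose proof (Rsum_nonneg g l H); lra.
  - specialize (IHl Hi); specialize (H a); lra.
Qed.

Lemma Rsum_incl {A} (g : A -> R) (l1 l2 : list A) : (forall x, 0 <= g x) ->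
  NoDup l1 -> incl l1 l2 -> Rsum (map g l1) <= Rsum (map g l2).
Proof.
  intros H Hnd; revert l2; induction Hnd as [|a l1 Hna Hnd IH]; intros l2 Hinc.
  - simpl; apply Rsum_nonneg; auto.
  - assert (Ha : In a l2) by (apply Hinc; simpl; auto).
    destruct (in_split _ _ Ha) as [l2a [l2b ->]].
    assert (incl l1 (l2a ++ l2b)).
    { intros y Hy. assert (Hy2 : In y (l2a ++ a :: l2b)) by (apply Hinc; simpl; auto).
      apply in_app_or in Hy2; apply in_or_app. destruct Hy2 as [?|[<-|?]]; auto. tauto. }
    specialize (IH _ H0). rewrite !map_app, !Rsum_app in *. simpl. lra.
Qed.

Lemma Rsum_map_app {A} (g : A -> R) l1 l2 : Rsum (map g (l1 ++ l2)) = Rsum (map g l1) + Rsum (map g l2).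
Proof. rewrite map_app; apply Rsum_app. Qed.

Lemma Rsum_scal {A} (g : A -> R) c l : Rsum (map (fun x => c * g x) l) = c * Rsum (map g l).
Proof. induction l; simpl; [ring| rewrite IHl; ring]. Qed.

Lemma Rsum_plus {A} (f g : A -> R) l : Rsum (map (fun x => f x + g x) l) = Rsum (map f l) + Rsum (map g l).
Proof. induction l; simpl; [ring| rewrite IHl; ring]. Qed.

Lemma Rsum_prod {A B} (f : A -> R) (g : B -> R) l1 l2 :
  Rsum (map (fun p => f (fst p) * g (snd p)) (list_prod l1 l2)) = Rsum (map f l1) * Rsum (map g l2).
Proof.
  induction l1; simpl; [ring|]. rewrite Rsum_map_app, IHl1, map_map. simpl.
  rewrite (Rsum_scal g (f a)). ring.
Qed.

Lemma Csum_app l1 l2 : Csum (l1 ++ l2) = Cplus (Csum l1) (Csum l2).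
Proof. induction l1; simpl. - now rewrite Cplus_0_l. - rewrite IHl1. now rewrite Cplus_assoc. Qed.

Lemma Cmod_Csum {A} (t : A -> C) l : Cmod (Csum (map t l)) <= Rsum (map (fun x => Cmod (t x)) l).
Proof.
  induction l; simpl. - rewrite Cmod_0; lra.
  - eapply Rle_trans; [apply Cmod_triangle|]. lra.
Qed.

Lemma Re_Csum {A} (t : A -> C) l : Re (Csum (map t l)) = Rsum (map (fun x => Re (t x)) l).
Proof. induction l; simpl; [reflexivity| rewrite <- IHl; reflexivity]. Qed.
Lemma Im_Csum {A} (t : A -> C) l : Im (Csum (map t l)) = Rsum (map (fun x => Im (t x)) l).
Proof. induction l; simpl; [reflexivity| rewrite <- IHl; reflexivity]. Qed.

Lemma Z3eqb_spec k j : Z3eqb k j = true <-> k = j.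
Proof.
  destruct k as [[a b] c], j as [[a' b'] c']; unfold Z3eqb, zx, zy, zz; simpl.
  rewrite !Bool.andb_true_iff, !Z.eqb_eq. split.
  - intros [[-> ->] ->]; auto.
  - intros H; inversion H; auto.
Qed.

Lemma Z3eqb_false k j : Z3eqb k j = false <-> k <> j.
Proof. rewrite <- Z3eqb_spec. destruct (Z3eqb k j); split; congruence. Qed.

Lemma in_zrange N z : In z (zrange N) <-> (- Z.of_nat N <= z <= Z.of_nat N)%Z.
Proof.
  unfold zrange; rewrite in_map_iff; split.
  - intros [n [<- Hn]]; apply in_seq in Hn; lia.
  - intros H; exists (Z.to_nat (z + Z.of_nat N)); split; [lia|]. apply in_seq; lia.
Qed.

Lemma NoDup_zrange N : NoDup (zrange N).
Proof.
  unfold zrange; apply NoDup_map_NoDup_ForallPairs; [|apply seq_NoDup].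
  intros x y _ _ H; lia.
Qed.

Lemma NoDup_list_prod' {A B} (l1 : list A) (l2 : list B) : NoDup l1 -> NoDup l2 -> NoDup (list_prod l1 l2).
Proof.
  intros H1 H2; induction H1 as [|a l1 Hna H1 IH]; simpl; [constructor|].
  apply NoDup_app; auto.
  - apply NoDup_map_NoDup_ForallPairs; auto. intros x y _ _ H; now inversion H.
  - intros [x y] Hx Hy. apply in_map_iff in Hx. destruct Hx as [z [Hz _]]. inversion Hz; subst.
    apply in_prod_iff in Hy; tauto.
Qed.

Lemma NoDup_box N : NoDup (box N).
Proof. unfold box; repeat apply NoDup_list_prod'; apply NoDup_zrange. Qed.

Lemma in_box N j : In j (box N) <-> (Z.abs (zx j) <= Z.of_nat N /\ Z.abs (zy j) <= Z.of_nat N /\ Z.abs (zz j) <= Z.of_nat N)%Z.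
Proof.
  destruct j as [[a b] c]; unfold box, zx, zy, zz; cbn [fst snd].
  split; [intros Hj; apply in_prod_iff in Hj as [Hab Hc]; apply in_prod_iff in Hab as [Ha Hb]; rewrite in_zrange in *; lia|]. intros Hj; apply in_prod; [apply in_prod|]; apply in_zrange; lia.
Qed.

Lemma incl_box N M : (N <= M)%nat -> incl (box N) (box M).
Proof. intros H j Hj; apply in_box in Hj; apply in_box; lia. Qed.

Definition nsq (k : Z3) : R := IZR (zx k) ^ 2 + IZR (zy k) ^ 2 + IZR (zz k) ^ 2.

Lemma nsq_ge1 k : k <> Z3zero -> 1 <= nsq k.
Proof.
  intros H. destruct k as [[a b] c]; unfold nsq, zx, zy, zz; simpl.
  assert (a <> 0 \/ b <> 0 \/ c <> 0)%Z.
  { destruct (Z.eq_dec a 0), (Z.eq_dec b 0), (Z.eq_dec c 0); subst; auto. }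
  assert (forall z, z <> 0%Z -> 1 <= IZR z ^ 2).
  { intros z Hz. replace (IZR z ^ 2) with (IZR (z*z)) by (rewrite mult_IZR; ring). apply IZR_le. nia. }
  assert (forall z, 0 <= IZR z ^2) by (intros; nra).
  pose proof (H2 a); pose proof (H2 b); pose proof (H2 c).
  destruct H0 as [H0|[H0|H0]].
  - pose proof (H1 a H0); lra.
  - pose proof (H1 b H0); lra.
  - pose proof (H1 c H0); lra.
Qed.

Lemma knorm_nsq k : knorm k = sqrt (nsq k).
Proof. reflexivity. Qed.

Lemma knorm_ge1 k : k <> Z3zero -> 1 <= knorm k.
Proof.
  intros H; rewrite knorm_nsq; rewrite <- sqrt_1; apply sqrt_le_1_alt; now apply nsq_ge1.
Qed.

Lemma knorm_sq k : knorm k ^ 2 = nsq k.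
Proof. rewrite knorm_nsq. simpl. rewrite Rmult_1_r. apply sqrt_sqrt. unfold nsq; nra. Qed.

Lemma knorm_nonneg k : 0 <= knorm k.
Proof. apply sqrt_pos. Qed.

Lemma knorm_triangle k j : knorm k <= knorm j + knorm (Z3sub k j).
Proof.
  pose proof (knorm_sq j) as Hj. pose proof (knorm_sq (Z3sub k j)) as Hm. pose proof (knorm_sq k) as Hk.
  pose proof (knorm_nonneg j). pose proof (knorm_nonneg k). pose proof (knorm_nonneg (Z3sub k j)).
  set (a := knorm j) in *. set (b := knorm (Z3sub k j)) in *. set (s := knorm k) in *.
  destruct k as [[k1 k2] k3], j as [[j1 j2] j3]. unfold nsq, Z3sub, z3, zx, zy, zz in *; cbn [fst snd] in *.
  rewrite !minus_IZR in Hm.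
  set (x1 := IZR j1) in *; set (x2 := IZR j2) in *; set (x3 := IZR j3) in *.
  set (y1 := IZR k1 - x1) in *; set (y2 := IZR k2 - x2) in *; set (y3 := IZR k3 - x3) in *.
  assert (Hk' : s ^ 2 = (x1 + y1)^2 + (x2+y2)^2 + (x3+y3)^2) by (rewrite Hk; unfold y1, y2, y3; ring).
  clear Hk.
  (* Cauchy-Schwarz: x.y <= a b *)
  assert (Hcs : x1*y1 + x2*y2 + x3*y3 <= a * b).
  { assert ((x1*y1 + x2*y2 + x3*y3)^2 <= (a*b)^2).
    { replace ((a*b)^2) with (a^2 * b^2) by ring. rewrite Hj, Hm.
      pose proof (pow2_ge_0 (x1*y2-x2*y1)); pose proof (pow2_ge_0 (x1*y3-x3*y1)); pose proof (pow2_ge_0 (x2*y3-x3*y2)).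
      match goal with |- ?L <= ?R => assert (R - L = (x1*y2-x2*y1)^2 + (x1*y3-x3*y1)^2 + (x2*y3-x3*y2)^2) by ring end. lra. }
    destruct (Rle_dec (x1*y1 + x2*y2 + x3*y3) 0); [nra|].
    apply Rsqr_incr_0_var; unfold Rsqr; nra. }
  assert (Hq : s ^ 2 <= (a + b) ^ 2) by (rewrite Hk'; nra).
  clear - Hq H H0 H1. apply Rsqr_incr_0_var; [|lra]. unfold Rsqr. simpl in Hq. lra.
Qed.

Lemma CS_vec v j : vdot v v = 1 -> Rabs (vdotZ v j) <= knorm j.
Proof.
  intros H. destruct v as [[v1 v2] v3]. unfold vdot, vdotZ, vx, vy, vz in *; cbn [fst snd] in *.
  pose proof (knorm_sq j) as Hj. pose proof (knorm_nonneg j).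
  unfold nsq in Hj. set (x1 := IZR (zx j)) in *; set (x2 := IZR (zy j)) in *; set (x3 := IZR (zz j)) in *.
  assert ((v1*x1+v2*x2+v3*x3)^2 <= (knorm j)^2).
  { rewrite Hj. replace (x1 ^ 2 + x2 ^ 2 + x3 ^ 2) with ((v1*v1+v2*v2+v3*v3)*(x1 ^ 2 + x2 ^ 2 + x3 ^ 2)) by (rewrite H; ring).
    pose proof (pow2_ge_0 (v1*x2-v2*x1)); pose proof (pow2_ge_0 (v1*x3-v3*x1)); pose proof (pow2_ge_0 (v2*x3-v3*x2)).
    match goal with |- ?L <= ?R => assert (R - L = (v1*x2-v2*x1)^2 + (v1*x3-v3*x1)^2 + (v2*x3-v3*x2)^2) by ring end. lra. }
  apply Rsqr_incr_0_var; [|lra]. unfold Rsqr. rewrite <- Rabs_mult. rewrite Rabs_pos_eq by apply Rle_0_sqr. simpl in H1. lra.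
Qed.

Lemma e_unit ez fz (Hb : valid_axis_basis ez fz) m : vdot (e_vec ez m) (e_vec ez m) = 1.
Proof.
  unfold e_vec. destruct (on_z_axis m) eqn:E.
  - apply (Hb (zz m)).
  - unfold on_z_axis in E. unfold vdot, vx, vy, vz; cbn [fst snd].
    assert (Hpos : 0 < IZR (zx m) ^ 2 + IZR (zy m) ^ 2).
    { apply Bool.andb_false_iff in E. destruct E as [E|E]; apply Z.eqb_neq in E; apply not_0_IZR in E;
      pose proof (pow2_ge_0 (IZR (zx m))); pose proof (pow2_ge_0 (IZR (zy m))); simpl; nra. }
    unfold khnorm. pose proof (sqrt_lt_R0 _ Hpos) as Hs. pose proof (sqrt_sqrt _ (Rlt_le _ _ Hpos)) as Hss.
    set (h := sqrt _) in *. set (x := IZR (zx m)) in *. set (y := IZR (zy m)) in *.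
    replace (y / h * (y / h) + - x / h * (- x / h) + 0 * 0) with ((x^2+y^2)/(h*h)) by (field; lra).
    rewrite Hss. field. lra.
Qed.

Lemma f_unit ez fz (Hb : valid_axis_basis ez fz) m : vdot (f_vec fz m) (f_vec fz m) = 1.
Proof.
  unfold f_vec. destruct (on_z_axis m) eqn:E.
  - apply (Hb (zz m)).
  - unfold on_z_axis in E. unfold vdot, vx, vy, vz; cbn [fst snd].
    assert (Hpos : 0 < IZR (zx m) ^ 2 + IZR (zy m) ^ 2).
    { apply Bool.andb_false_iff in E. destruct E as [E|E]; apply Z.eqb_neq in E; apply not_0_IZR in E;
      pose proof (pow2_ge_0 (IZR (zx m))); pose proof (pow2_ge_0 (IZR (zy m))); simpl; nra. }
    assert (Hpos2 : 0 < IZR (zx m) ^ 2 + IZR (zy m) ^ 2 + IZR (zz m) ^ 2) by (pose proof (pow2_ge_0 (IZR (zz m))); lra).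
    unfold khnorm, knorm. pose proof (sqrt_lt_R0 _ Hpos) as Hs. pose proof (sqrt_sqrt _ (Rlt_le _ _ Hpos)) as Hss.
    pose proof (sqrt_lt_R0 _ Hpos2) as Hs2. pose proof (sqrt_sqrt _ (Rlt_le _ _ Hpos2)) as Hss2.
    set (h := sqrt (_ + _)) in *. set (n := sqrt (_ + _ + _)) in *.
    set (x := IZR (zx m)) in *. set (y := IZR (zy m)) in *. set (z := IZR (zz m)) in *.
    match goal with |- ?L = 1 => replace L with ((h*h)*((x^2+y^2) * z^2 + (h*h)^2)/((n*n)*(h*h)*(h*h))) by (field; lra) end.
    rewrite Hss, Hss2. field. split; lra.
Qed.

Lemma e_dot ez fz (Hb : valid_axis_basis ez fz) m j : Rabs (vdotZ (e_vec ez m) j) <= knorm j.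
Proof. apply CS_vec, (e_unit ez fz Hb). Qed.
Lemma f_dot ez fz (Hb : valid_axis_basis ez fz) m j : Rabs (vdotZ (f_vec fz m) j) <= knorm j.
Proof. apply CS_vec, (f_unit ez fz Hb). Qed.

Lemma Rpower_pos x y : 0 < Rpower x y.
Proof. unfold Rpower; apply exp_pos. Qed.

Lemma rp_anti x y b : 0 < x -> x <= y -> b <= 0 -> Rpower y b <= Rpower x b.
Proof.
  intros Hx Hxy Hb. replace b with (- (- b)) by ring. rewrite (Rpower_Ropp x (-b)), (Rpower_Ropp y (-b)).
  apply Rinv_le_contravar; [apply Rpower_pos|]. apply Rle_Rpower_l; lra.
Qed.

Lemma rp_exp x p q : 1 <= x -> p <= q -> Rpower x p <= Rpower x q.
Proof. intros; apply Rle_Rpower; auto. Qed.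

Lemma key_pw a b s beta p : 1 <= a -> 1 <= b -> 0 < s -> s <= a + b -> beta < 0 ->
  p <= 2 * beta -> p <= -6 ->
  Rpower b beta * Rpower a p <= Rpower (s/2) beta * (Rpower a (-6) + Rpower b (-6)).
Proof.
  intros Ha Hb Hs Hsab Hbe Hp1 Hp2.
  pose proof (Rpower_pos a (-6)); pose proof (Rpower_pos b (-6)); pose proof (Rpower_pos (s/2) beta).
  pose proof (Rpower_pos b beta); pose proof (Rpower_pos a p).
  destruct (Rle_dec a (s/2)).
  - assert (Rpower b beta <= Rpower (s/2) beta) by (apply rp_anti; lra).
    assert (Rpower a p <= Rpower a (-6)) by (apply rp_exp; lra).
    assert (Rpower b beta * Rpower a p <= Rpower (s/2) beta * Rpower a (-6)) by (apply Rmult_le_compat; lra).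
    nra.
  - assert (Has : Rpower a beta <= Rpower (s/2) beta) by (apply rp_anti; lra).
    destruct (Rle_dec a b).
    + assert (Rpower b beta <= Rpower a beta) by (apply rp_anti; lra).
      assert (Rpower a p <= Rpower a (-6)) by (apply rp_exp; lra).
      assert (Rpower b beta * Rpower a p <= Rpower (s/2) beta * Rpower a (-6)) by (apply Rmult_le_compat; lra).
      nra.
    + destruct (Rle_dec (-6) beta).
      * assert (Hb1 : Rpower b beta = Rpower b (-6) * Rpower b (beta + 6)) by (rewrite <- Rpower_plus; f_equal; ring).
        assert (Rpower b (beta+6) <= Rpower a (beta+6)) by (apply Rle_Rpower_l; lra).
        assert (Rpower a (beta + 6) * Rpower a p <= Rpower a beta).
        { rewrite <- Rpower_plus. apply rp_exp; lra. }
        pose proof (Rpower_pos b (beta+6)); pose proof (Rpower_pos a (beta+6)).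
        assert (Rpower b beta * Rpower a p <= Rpower b (-6) * Rpower (s/2) beta).
        { rewrite Hb1. rewrite Rmult_assoc. apply Rmult_le_compat_l; [lra|].
          assert (Rpower b (beta + 6) * Rpower a p <= Rpower a (beta + 6) * Rpower a p) by (apply Rmult_le_compat_r; lra).
          lra. }
        nra.
      * assert (Rpower b beta <= Rpower b (-6)) by (apply rp_exp; lra).
        assert (Rpower a p <= Rpower a beta) by (apply rp_exp; lra).
        assert (Rpower b beta * Rpower a p <= Rpower b (-6) * Rpower (s/2) beta) by (apply Rmult_le_compat; lra).
        nra.
Qed.

Definition f1 (y : Z) : R := / (1 + IZR y ^ 2).
Definition Phi (y : Z) : R := if (0 <=? y)%Z then - 3 / (IZR y + 1) else 3 / (1 - IZR y) - 6.

Lemma f1_pos y : 0 < f1 y.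
Proof. unfold f1. apply Rinv_0_lt_compat. pose proof (pow2_ge_0 (IZR y)); lra. Qed.

Lemma f1_even y : f1 (- y) = f1 y.
Proof. unfold f1. rewrite opp_IZR. f_equal. ring. Qed.

Lemma Phi_bound y : -6 <= Phi y <= 0.
Proof.
  unfold Phi. destruct (0 <=? y)%Z eqn:E.
  - apply Z.leb_le in E. apply IZR_le in E. split.
    + apply (Rmult_le_reg_r (IZR y + 1)); [lra|]. unfold Rdiv. rewrite Rmult_assoc, Rinv_l by lra. nra.
    + unfold Rdiv. assert (0 < / (IZR y + 1)) by (apply Rinv_0_lt_compat; lra). nra.
  - apply Z.leb_gt in E. apply IZR_lt in E. assert (0 < / (1 - IZR y)) by (apply Rinv_0_lt_compat; lra).
    assert (3 / (1 - IZR y) <= 3).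
    { apply (Rmult_le_reg_r (1 - IZR y)); [lra|]. unfold Rdiv. rewrite Rmult_assoc, Rinv_l by lra. nra. }
    unfold Rdiv in *. nra.
Qed.

Lemma inv_le3 A B : 0 < A -> 0 < B -> B <= 3 * A -> / A <= 3 / B.
Proof.
  intros HA HB H. replace (3 / B) with (/ (B / 3)) by (field; lra).
  apply Rinv_le_contravar; lra.
Qed.

Lemma f1_step y : f1 y <= Phi (y + 1) - Phi y.
Proof.
  unfold f1, Phi. 
  destruct (Z_lt_le_dec y 0) as [Hy|Hy].
  - destruct (Z.eq_dec y (-1)) as [->|Hn].
    + simpl. replace (IZR (-1)) with (-1) by reflexivity.
      replace (-3 / (0 + 1) - (3 / (1 - -1) - 6)) with (3/2) by field.
      apply inv_le3; lra.
    + replace ((0 <=? y + 1)%Z) with false by (symmetry; apply Z.leb_gt; lia).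
      replace ((0 <=? y)%Z) with false by (symmetry; apply Z.leb_gt; lia).
      rewrite plus_IZR.
      assert (Hy1 : IZR y <= -2) by (apply IZR_le; lia).
      set (t := IZR y) in *.
      replace (3 / (1 - (t + 1)) - 6 - (3 / (1 - t) - 6)) with (3 / ((-t) * (1 - t))) by (field; lra).
      apply inv_le3; nra.
  - replace ((0 <=? y + 1)%Z) with true by (symmetry; apply Z.leb_le; lia).
    replace ((0 <=? y)%Z) with true by (symmetry; apply Z.leb_le; lia).
    rewrite plus_IZR.
    assert (Hy1 : 0 <= IZR y) by (apply IZR_le; lia).
    destruct (Z.eq_dec y 0) as [->|Hn].
    + replace (IZR 0) with 0 by reflexivity.
      replace (-3 / (0 + 1 + 1) - -3 / (0 + 1)) with (3/2) by field. apply inv_le3; lra.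
    + assert (Hy2 : 1 <= IZR y) by (apply IZR_le; lia).
      set (t := IZR y) in *.
      replace (-3 / (t + 1 + 1) - -3 / (t + 1)) with (3 / ((t+1)*(t+2))) by (field; lra).
      assert (0 <= (2*t-1)*(t-1)) by (apply Rmult_le_pos; lra).
      apply inv_le3; nra.
Qed.

Lemma f1_seq a s L : Rsum (map (fun n => f1 (a + Z.of_nat n)) (seq s L)) <= Phi (a + Z.of_nat s + Z.of_nat L) - Phi (a + Z.of_nat s).
Proof.
  revert s; induction L; intros s; unfold Rsum in *; cbn [seq map fold_right].
  - change (Z.of_nat 0) with 0%Z; rewrite Z.add_0_r; lra.
  - specialize (IHL (S s)). pose proof (f1_step (a + Z.of_nat s)).
    replace (a + Z.of_nat (S s) + Z.of_nat L)%Z with (a + Z.of_nat s + Z.of_nat (S L))%Z in IHL by lia.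
    replace (a + Z.of_nat (S s))%Z with (a + Z.of_nat s + 1)%Z in IHL by lia. lra.
Qed.

Lemma f1_zrange c N : Rsum (map (fun x => f1 (c - x)) (zrange N)) <= 6.
Proof.
  unfold zrange. rewrite map_map.
  rewrite (map_ext _ (fun n => f1 (- (c + Z.of_nat N) + Z.of_nat n))).
  - eapply Rle_trans; [apply f1_seq|]. pose proof (Phi_bound (- (c + Z.of_nat N) + Z.of_nat 0 + Z.of_nat (2 * N + 1))).
    pose proof (Phi_bound (- (c + Z.of_nat N) + Z.of_nat 0)). lra.
  - intros n. rewrite <- f1_even; f_equal; lia.
Qed.

Lemma f1_zrange0 N : Rsum (map f1 (zrange N)) <= 6.
Proof.
  rewrite (map_ext f1 (fun x => f1 (0 - x))); [apply f1_zrange|].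
  intros x. rewrite <- f1_even; f_equal; lia.
Qed.

Lemma box_sum (F1 F2 F3 : Z -> R) N :
  Rsum (map (fun j => F1 (zx j) * F2 (zy j) * F3 (zz j)) (box N)) =
  Rsum (map F1 (zrange N)) * Rsum (map F2 (zrange N)) * Rsum (map F3 (zrange N)).
Proof.
  unfold box. rewrite (map_ext _ (fun p => (fun q => F1 (fst q) * F2 (snd q)) (fst p) * F3 (snd p)))
    by (intros [[x y] z]; reflexivity).
  rewrite (Rsum_prod (fun q => F1 (fst q) * F2 (snd q)) F3). rewrite (Rsum_prod F1 F2). reflexivity.
Qed.

Definition wt (j : Z3) : R := f1 (zx j) * f1 (zy j) * f1 (zz j).

Lemma wt_pos j : 0 < wt j.
Proof. unfold wt; pose proof (f1_pos (zx j)); pose proof (f1_pos (zy j)); pose proof (f1_pos (zz j)).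
  apply Rmult_lt_0_compat; [apply Rmult_lt_0_compat|]; auto. Qed.

Lemma Rsum6 a b c : 0 <= a <= 6 -> 0 <= b <= 6 -> 0 <= c <= 6 -> a * b * c <= 216.
Proof. intros; assert (a*b <= 36) by nra. nra. Qed.

Lemma f1_sum_nonneg (g : Z -> Z) N : 0 <= Rsum (map (fun x => f1 (g x)) (zrange N)).
Proof. apply Rsum_nonneg. intros; left; apply f1_pos. Qed.

Lemma wt_box N : Rsum (map wt (box N)) <= 216.
Proof.
  unfold wt. rewrite box_sum. pose proof (f1_zrange0 N).
  assert (0 <= Rsum (map f1 (zrange N))) by (apply Rsum_nonneg; intros; left; apply f1_pos).
  apply Rsum6; lra.
Qed.

Lemma wt_shift_box k N : Rsum (map (fun j => wt (Z3sub k j)) (box N)) <= 216.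
Proof.
  unfold wt, Z3sub, z3, zx, zy, zz; cbn [fst snd].
  rewrite (box_sum (fun x => f1 (fst (fst k) - x)) (fun x => f1 (snd (fst k) - x)) (fun x => f1 (snd k - x))).
  pose proof (f1_zrange (fst (fst k)) N); pose proof (f1_zrange (snd (fst k)) N); pose proof (f1_zrange (snd k) N).
  pose proof (f1_sum_nonneg (fun x => fst (fst k) - x)%Z N).
  pose proof (f1_sum_nonneg (fun x => snd (fst k) - x)%Z N).
  pose proof (f1_sum_nonneg (fun x => snd k - x)%Z N).
  apply Rsum6; lra.
Qed.

Lemma rp6 j : j <> Z3zero -> Rpower (knorm j) (-6) <= 8 * wt j.
Proof.
  intros H. pose proof (knorm_ge1 j H) as Ha. pose proof (knorm_sq j) as Hs.
  replace (Rpower (knorm j) (-6)) with (/ Rpower (knorm j) (INR 6)) by (rewrite <- Rpower_Ropp; f_equal; simpl; ring). rewrite Rpower_pow by lra.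
  unfold wt, f1. unfold nsq in Hs. set (a := knorm j) in *.
  set (x := IZR (zx j)) in *. set (y := IZR (zy j)) in *. set (z := IZR (zz j)) in *.
  pose proof (pow2_ge_0 x); pose proof (pow2_ge_0 y); pose proof (pow2_ge_0 z).
  rewrite <- !Rinv_mult.
  replace (8 * / ((1 + x^2) * (1+y^2) * (1+z^2))) with (/ (((1 + x^2) * (1+y^2) * (1+z^2)) / 8)) by (field; repeat split; nra).
  apply Rinv_le_contravar.
  - assert (0 < (1+x^2)*(1+y^2)) by nra. nra.
  - assert (1 + x^2 <= 2 * a^2) by nra. assert (1 + y^2 <= 2 * a^2) by nra. assert (1 + z^2 <= 2 * a^2) by nra.
    assert ((1+x^2)*(1+y^2) <= (2*a^2)*(2*a^2)) by (apply Rmult_le_compat; nra).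
    assert ((1+x^2)*(1+y^2)*(1+z^2) <= (2*a^2)*(2*a^2)*(2*a^2)) by (apply Rmult_le_compat; nra).
    nra.
Qed.

Lemma coord_bound (x : Z) (kap a : R) : 0 < kap -> IZR x ^ 2 <= a ^ 2 -> 0 <= a -> a < kap ->
  (Z.abs x <= Z.of_nat (Z.to_nat (up kap)))%Z.
Proof.
  intros Hk Hx Ha Hak. destruct (archimed kap) as [Hu _].
  assert (Hlt : - kap < IZR x < kap).
  { split.
    - destruct (Rlt_dec (- kap) (IZR x)); auto. exfalso. nra.
    - destruct (Rlt_dec (IZR x) kap); auto. exfalso. nra. }
  assert (- up kap < x < up kap)%Z.
  { split; apply lt_IZR; rewrite ?opp_IZR; lra. }
  assert (0 < up kap)%Z by (apply lt_IZR; lra).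
  lia.
Qed.

Lemma gamma_bound (gamma : Z3 -> C) c_g kappa_g alpha (Hcg : 0 <= c_g) (Hkap1 : 1 < kappa_g)
  (Hgdecay : forall k, k <> Z3zero -> kappa_g <= knorm k ->
       Cmod (gamma k) <= c_g * Rpower (knorm k) alpha) :
  exists D, 0 <= D /\ forall j, j <> Z3zero ->
     Cmod (gamma j) * knorm j <= D * Rpower (knorm j) (alpha + 1).
Proof.
  set (p := alpha + 1).
  set (D0 := Rsum (map (fun j => Cmod (gamma j) * knorm j * Rpower (knorm j) (- p)) (box (Z.to_nat (up kappa_g))))).
  assert (HD0 : 0 <= D0).
  { apply Rsum_nonneg. intros j. pose proof (Cmod_ge_0 (gamma j)); pose proof (knorm_nonneg j); pose proof (Rpower_pos (knorm j) (-p)).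
    apply Rmult_le_pos; [apply Rmult_le_pos|]; lra. }
  exists (c_g + D0); split; [lra|].
  intros j Hj. pose proof (knorm_ge1 j Hj) as Ha. pose proof (Rpower_pos (knorm j) p).
  destruct (Rle_dec kappa_g (knorm j)).
  - specialize (Hgdecay j Hj r).
    assert (Rpower (knorm j) p = Rpower (knorm j) alpha * knorm j) by (unfold p; rewrite Rpower_plus, Rpower_1; lra).
    assert (Cmod (gamma j) * knorm j <= c_g * Rpower (knorm j) alpha * knorm j) by (apply Rmult_le_compat_r; lra).
    nra.
  - assert (Hin : In j (box (Z.to_nat (up kappa_g)))).
    { apply in_box. pose proof (knorm_sq j) as Hs. unfold nsq in Hs.
      pose proof (pow2_ge_0 (IZR (zx j))); pose proof (pow2_ge_0 (IZR (zy j))); pose proof (pow2_ge_0 (IZR (zz j))).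
      pose proof (knorm_nonneg j).
      repeat split; eapply coord_bound; try apply Rnot_le_lt; eauto; lra. }
    pose proof (Rsum_elem (fun j => Cmod (gamma j) * knorm j * Rpower (knorm j) (- p)) (box (Z.to_nat (up kappa_g))) j) as He.
    assert (He' : Cmod (gamma j) * knorm j * Rpower (knorm j) (- p) <= D0).
    { apply He; auto. intros i. pose proof (Cmod_ge_0 (gamma i)); pose proof (knorm_nonneg i); pose proof (Rpower_pos (knorm i) (-p)).
      apply Rmult_le_pos; [apply Rmult_le_pos|]; lra. }
    assert (Hinv : Rpower (knorm j) (- p) * Rpower (knorm j) p = 1).
    { rewrite <- Rpower_plus. replace (-p + p) with 0 by ring. apply Rpower_O; lra. }
    assert (Cmod (gamma j) * knorm j = Cmod (gamma j) * knorm j * Rpower (knorm j) (- p) * Rpower (knorm j) p).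
    { rewrite Rmult_assoc, Hinv. ring. }
    rewrite H0. assert (Cmod (gamma j) * knorm j * Rpower (knorm j) (- p) * Rpower (knorm j) p <= D0 * Rpower (knorm j) p)
      by (apply Rmult_le_compat_r; lra).
    assert (0 <= c_g * Rpower (knorm j) p) by (apply Rmult_le_pos; lra).
    nra.
Qed.

Lemma Rabs_le_inv x c : Rabs x <= c -> -c <= x <= c.
Proof. intros H. pose proof (Rle_abs x). pose proof (Rle_abs (-x)). rewrite Rabs_Ropp in H1. lra. Qed.

Lemma conv_parts (t : Z3 -> C) (L : nat -> list Z3) (E : R) :
  (forall N, NoDup (L N)) -> (forall N, incl (L N) (L (S N))) ->
  (forall N, Rsum (map (fun j => Cmod (t j)) (L N)) <= E) ->
  exists a b : R, is_lim_seq (fun N => Re (Csum (map t (L N)))) a /\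
              is_lim_seq (fun N => Im (Csum (map t (L N)))) b.
Proof.
  intros Hnd Hinc HE.
  set (B := fun N => Rsum (map (fun j => Cmod (t j)) (L N))).
  set (X1 := fun N => Rsum (map (fun j => Cmod (t j) + Re (t j)) (L N))).
  set (X2 := fun N => Rsum (map (fun j => Cmod (t j) + Im (t j)) (L N))).
  assert (nn1 : forall j, 0 <= Cmod (t j) + Re (t j)) by (intros j; pose proof (re_le_Cmod (t j)); apply Rabs_le_inv in H; lra).
  assert (nn2 : forall j, 0 <= Cmod (t j) + Im (t j)).
  { intros j. assert (Rabs (Im (t j)) <= Cmod (t j)).
    { apply Rsqr_incr_0_var; [|apply Cmod_ge_0]. rewrite <- Rsqr_abs. unfold Rsqr.
      pose proof (Cmod2_alt (t j)). simpl in H. pose proof (pow2_ge_0 (Re (t j))). simpl in H0. nra. }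
    apply Rabs_le_inv in H; lra. }
  assert (nn0 : forall j, 0 <= Cmod (t j)) by (intros; apply Cmod_ge_0).
  assert (Hle1 : forall j, Cmod (t j) + Re (t j) <= 2 * Cmod (t j)) by (intros j; pose proof (re_le_Cmod (t j)); apply Rabs_le_inv in H; lra).
  assert (Hle2 : forall j, Cmod (t j) + Im (t j) <= 2 * Cmod (t j)) by (intros j; specialize (nn2 j); pose proof (re_le_Cmod (t j));
     assert (Rabs (Im (t j)) <= Cmod (t j)) by (apply Rsqr_incr_0_var; [|apply Cmod_ge_0]; rewrite <- Rsqr_abs; unfold Rsqr;
       pose proof (Cmod2_alt (t j)) as Hc; simpl in Hc; pose proof (pow2_ge_0 (Re (t j))) as Hr; simpl in Hr; nra);
     apply Rabs_le_inv in H0; lra).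
  assert (HB : ex_finite_lim_seq B).
  { apply ex_finite_lim_seq_incr with E; [|apply HE]. intros N; unfold B; apply Rsum_incl; auto. }
  assert (H1 : ex_finite_lim_seq X1).
  { apply ex_finite_lim_seq_incr with (2*E).
    - intros N; unfold X1; apply Rsum_incl; auto.
    - intros N. unfold X1. eapply Rle_trans; [apply (Rsum_le _ (fun j => 2 * Cmod (t j))); intros; apply Hle1|].
      rewrite Rsum_scal. specialize (HE N). lra. }
  assert (H2 : ex_finite_lim_seq X2).
  { apply ex_finite_lim_seq_incr with (2*E).
    - intros N; unfold X2; apply Rsum_incl; auto.
    - intros N. unfold X2. eapply Rle_trans; [apply (Rsum_le _ (fun j => 2 * Cmod (t j))); intros; apply Hle2|].
      rewrite Rsum_scal. specialize (HE N). lra. }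
  destruct HB as [lB HB], H1 as [l1 H1], H2 as [l2 H2].
  exists (l1 - lB), (l2 - lB). split.
  - apply (is_lim_seq_ext (fun N => X1 N - B N)).
    + intros N. unfold X1, B. rewrite Rsum_plus, Re_Csum. ring.
    + apply is_lim_seq_minus' ; auto.
  - apply (is_lim_seq_ext (fun N => X2 N - B N)).
    + intros N. unfold X2, B. rewrite Rsum_plus, Im_Csum. ring.
    + apply is_lim_seq_minus' ; auto.
Qed.

Lemma lim_C (f : nat -> C) (a b : R) : is_lim_seq (fun n => Re (f n)) a -> is_lim_seq (fun n => Im (f n)) b ->
  filterlim f eventually (locally ((a, b) : C)).
Proof.
  intros Ha Hb. apply is_lim_seq_spec in Ha. apply is_lim_seq_spec in Hb.
  intros P [eps Heps].
  specialize (Ha eps). specialize (Hb eps).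
  unfold filtermap. generalize (filter_and _ _ Ha Hb). apply filter_imp.
  intros n [H1 H2]. apply Heps. destruct (f n) as [x y] eqn:E. simpl in H1, H2.
  split; simpl; unfold AbsRing_ball, abs, minus, plus, opp; simpl; auto.
Qed.

Lemma sub_nz k j : j <> k -> Z3sub k j <> Z3zero.
Proof.
  intros H E. apply H. destruct k as [[a b] c], j as [[x y] z]. unfold Z3sub, z3, zx, zy, zz, Z3zero in E.
  cbn [fst snd] in E. injection E; intros. f_equal; [f_equal|]; lia.
Qed.

Lemma term_bound ez fz (Hb : valid_axis_basis ez fz) gamma V W beta U Xi k j :
  0 <= U -> Cmod (V (Z3sub k j)) <= Xi -> Cmod (W (Z3sub k j)) <= Xi ->
  Cmod (theta_term ez fz gamma V W beta U k j) <=
    2 * U * Xi * (Rpower (knorm (Z3sub k j)) beta * (Cmod (gamma j) * knorm j)).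
Proof.
  intros HU HV HW. unfold theta_term. set (m := Z3sub k j) in *.
  rewrite !Cmod_mult, !Cmod_R.
  rewrite (Rabs_pos_eq (Rpower _ _)) by (left; apply Rpower_pos).
  rewrite (Rabs_pos_eq U) by lra.
  assert (Hs : Cmod (RtoC (vdotZ (e_vec ez m) j) * V m + RtoC (vdotZ (f_vec fz m) j) * W m) <= 2 * Xi * knorm j).
  { eapply Rle_trans; [apply Cmod_triangle|]. rewrite !Cmod_mult, !Cmod_R.
    pose proof (e_dot ez fz Hb m j); pose proof (f_dot ez fz Hb m j).
    pose proof (Cmod_ge_0 (V m)); pose proof (Cmod_ge_0 (W m)). pose proof (knorm_nonneg j).
    assert (Rabs (vdotZ (e_vec ez m) j) * Cmod (V m) <= knorm j * Xi) by (apply Rmult_le_compat; auto; apply Rabs_pos).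
    assert (Rabs (vdotZ (f_vec fz m) j) * Cmod (W m) <= knorm j * Xi) by (apply Rmult_le_compat; auto; apply Rabs_pos).
    lra. }
  pose proof (Rpower_pos (knorm m) beta). pose proof (Cmod_ge_0 (gamma j)).
  set (A := Rpower (knorm m) beta * Cmod (gamma j) * U).
  assert (0 <= A) by (unfold A; apply Rmult_le_pos; [apply Rmult_le_pos|]; lra).
  apply Rle_trans with (A * (2 * Xi * knorm j)); [apply Rmult_le_compat_l; auto|].
  unfold A; lra.
Qed.

Lemma K_lower kappa beta s : 1 <= kappa -> beta < 0 -> 1 <= s ->
  Rpower (s / 2) beta <= Rpower 2 (- beta) * Kbeta kappa beta s.
Proof.
  intros Hk Hb Hs. unfold Kbeta.
  assert (H2 : Rpower (s/2) beta <= Rpower 2 (-beta)).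
  { replace (Rpower 2 (-beta)) with (Rpower (/2) beta).
    - apply rp_anti; lra.
    - rewrite Rpower_Ropp. unfold Rpower. rewrite ln_Rinv by lra. rewrite <- exp_Ropp. f_equal. ring. }
  assert (H1 : 1 <= Rpower 2 (-beta)).
  { rewrite <- (Rpower_O 2) by lra. apply rp_exp; lra. }
  apply Rmin_case.
  - lra.
  - assert (Rpower (s / 2) beta <= Rpower (s / (2 * kappa)) beta).
    { replace (s/2) with ((s/(2*kappa)) * kappa) by (field; lra).
      rewrite <- Rpower_mult_distr by (try apply Rdiv_lt_0_compat; lra).
      pose proof (Rpower_pos (s/(2*kappa)) beta).
      assert (Rpower kappa beta <= 1) by (rewrite <- (Rpower_O kappa) by lra; apply rp_exp; lra).
      nra. }
    pose proof (Rpower_pos (s / (2 * kappa)) beta). nra.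
Qed.

Theorem mainTheorem5
  (ez fz : Z -> vec) (Hbasis : valid_axis_basis ez fz)
  (gamma : Z3 -> C) (c_g kappa_g alpha beta : R)
  (Hgsym : forall k, k <> Z3zero -> gamma (Z3neg k) = Cconj (gamma k))
  (Hcg : 0 <= c_g) (Hkap1 : 1 < kappa_g) (Halpha0 : alpha < 0)
  (Hgdecay : forall k, k <> Z3zero -> kappa_g <= knorm k ->
       Cmod (gamma k) <= c_g * Rpower (knorm k) alpha)
  (Hbeta : beta < -2) (Hkap : 16 <= kappa_g)
  (Halpha : alpha <= 2 * Rmin beta (-3) - 1) :
  exists Cst : R, 0 <= Cst /\
    forall (U Xi : R) (V W : Z3 -> C),
      0 <= U ->
      (forall k, k <> Z3zero -> Cmod (V k) <= Xi /\ Cmod (W k) <= Xi) ->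
      (forall k, k <> Z3zero ->
         V (Z3neg k) = Cconj (V k) /\ W (Z3neg k) = Cconj (W k)) ->
      forall k : Z3, k <> Z3zero ->
        exists theta_k : C,
          filterlim (theta_partial ez fz gamma V W beta U k) eventually
                    (locally theta_k) /\
          Cmod theta_k <=
            Cst * U * Xi * / (knorm k ^ 2) * Kbeta kappa_g beta (knorm k).
Proof.
  destruct (gamma_bound gamma c_g kappa_g alpha Hcg Hkap1 Hgdecay) as [D [HD HDb]].
  set (p := alpha + 1).
  assert (Hp1 : p <= 2 * beta) by (unfold p; pose proof (Rmin_l beta (-3)); lra).
  assert (Hp2 : p <= -6) by (unfold p; pose proof (Rmin_r beta (-3)); lra).
  pose proof (Rpower_pos 2 (-beta)) as H2b.
  exists (16 * 432 * D * Rpower 2 (- beta)). split; [apply Rmult_le_pos; lra|].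
  intros U Xi V W HU HVW _ k Hk.
  assert (HXi : 0 <= Xi) by (destruct (HVW k Hk); pose proof (Cmod_ge_0 (V k)); lra).
  set (s := knorm k).
  assert (Hs1 : 1 <= s) by (apply knorm_ge1; auto).
  set (t := theta_term ez fz gamma V W beta U k).
  set (L := fun N => filter (fun j => negb (Z3eqb j Z3zero) && negb (Z3eqb j k))%bool (box N)).
  set (E := 16 * U * Xi * D * Rpower (s/2) beta * 432).
  assert (HinL : forall N j, In j (L N) -> j <> Z3zero /\ j <> k).
  { intros N j Hj. unfold L in Hj. apply filter_In in Hj as [_ Hj].
    apply andb_prop in Hj as [H1 H2]. apply Bool.negb_true_iff in H1, H2.
    apply Z3eqb_false in H1, H2. auto. }
  assert (HE : forall N, Rsum (map (fun j => Cmod (t j)) (L N)) <= E).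
  { intros N.
    set (g := fun j => 16 * U * Xi * D * Rpower (s/2) beta * (wt j + wt (Z3sub k j))).
    assert (Hg0 : forall j, 0 <= g j).
    { intros j; unfold g. pose proof (wt_pos j); pose proof (wt_pos (Z3sub k j)); pose proof (Rpower_pos (s/2) beta).
      repeat apply Rmult_le_pos; lra. }
    apply Rle_trans with (Rsum (map g (L N))).
    - apply Rsum_le. intros j Hj. destruct (HinL N j Hj) as [Hj0 Hjk].
      pose proof (sub_nz k j Hjk) as Hm.
      destruct (HVW _ Hm) as [HV HW].
      eapply Rle_trans; [apply (term_bound ez fz Hbasis gamma V W beta U Xi k j HU HV HW)|].
      pose proof (HDb j Hj0) as HDj. fold p in HDj.
      pose proof (key_pw (knorm j) (knorm (Z3sub k j)) s beta p (knorm_ge1 j Hj0) (knorm_ge1 _ Hm) ltac:(lra)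
                    (knorm_triangle k j) ltac:(lra) Hp1 Hp2) as Hkey.
      pose proof (rp6 j Hj0); pose proof (rp6 _ Hm).
      pose proof (Rpower_pos (knorm (Z3sub k j)) beta) as Hpb. pose proof (Rpower_pos (s/2) beta) as Hps.
      pose proof (Rpower_pos (knorm j) p). 
      assert (S1 : Rpower (knorm (Z3sub k j)) beta * (Cmod (gamma j) * knorm j) <=
                   Rpower (knorm (Z3sub k j)) beta * (D * Rpower (knorm j) p)) by (apply Rmult_le_compat_l; lra).
      assert (S2 : Rpower (knorm (Z3sub k j)) beta * (D * Rpower (knorm j) p) <=
                   D * (Rpower (s/2) beta * (8 * wt j + 8 * wt (Z3sub k j)))).
      { replace (Rpower (knorm (Z3sub k j)) beta * (D * Rpower (knorm j) p)) with
          (D * (Rpower (knorm (Z3sub k j)) beta * Rpower (knorm j) p)) by ring.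
        apply Rmult_le_compat_l; [lra|]. eapply Rle_trans; [apply Hkey|].
        apply Rmult_le_compat_l; lra. }
      assert (0 <= 2 * U * Xi) by (apply Rmult_le_pos; lra).
      assert (2 * U * Xi * (Rpower (knorm (Z3sub k j)) beta * (Cmod (gamma j) * knorm j)) <=
              2 * U * Xi * (D * (Rpower (s/2) beta * (8 * wt j + 8 * wt (Z3sub k j))))) by (apply Rmult_le_compat_l; lra).
      unfold g. lra.
    - eapply Rle_trans; [apply Rsum_filter; auto|].
      unfold g. rewrite (Rsum_scal (fun j => wt j + wt (Z3sub k j))), Rsum_plus.
      pose proof (wt_box N); pose proof (wt_shift_box k N).
      assert (0 <= 16 * U * Xi * D * Rpower (s / 2) beta) by (pose proof (Rpower_pos (s/2) beta); repeat apply Rmult_le_pos; lra).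
      unfold E. apply Rmult_le_compat_l; lra. }
  assert (HndL : forall N, NoDup (L N)) by (intros; apply NoDup_filter, NoDup_box).
  assert (HincL : forall N, incl (L N) (L (S N))).
  { intros N j Hj. unfold L in *. apply filter_In in Hj as [Hj1 Hj2]. apply filter_In; split; auto.
    apply (incl_box N (S N)); auto. }
  destruct (conv_parts t L E HndL HincL HE) as [a [b [Ha Hb]]].
  set (r := / (s ^ 2)).
  assert (HP : forall N, theta_partial ez fz gamma V W beta U k N = Cmult (Cmult Ci (RtoC r)) (Csum (map t (L N)))) by reflexivity.
  assert (HRe : forall z : C, Re (Cmult (Cmult Ci (RtoC r)) z) = - r * Im z) by (intros [x y]; unfold Cmult, Ci, RtoC, Re, Im; simpl; ring).
  assert (HIm : forall z : C, Im (Cmult (Cmult Ci (RtoC r)) z) = r * Re z) by (intros [x y]; unfold Cmult, Ci, RtoC, Re, Im; simpl; ring).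
  assert (LRe : is_lim_seq (fun N => Re (theta_partial ez fz gamma V W beta U k N)) (- r * b)).
  { apply (is_lim_seq_ext (fun N => - r * Im (Csum (map t (L N))))); [intros; rewrite HP, HRe; reflexivity|].
    pose proof (is_lim_seq_scal_l _ (-r) b Hb) as H; simpl in H; exact H. }
  assert (LIm : is_lim_seq (fun N => Im (theta_partial ez fz gamma V W beta U k N)) (r * a)).
  { apply (is_lim_seq_ext (fun N => r * Re (Csum (map t (L N))))); [intros; rewrite HP, HIm; reflexivity|].
    pose proof (is_lim_seq_scal_l _ r a Ha) as H; simpl in H; exact H. }
  exists ((- r * b, r * a) : C). split; [apply lim_C; auto|].
  assert (Hr : 0 < r) by (unfold r; apply Rinv_0_lt_compat; pose proof (pow_lt s 2); lra).
  assert (HE0 : 0 <= E) by (specialize (HE 0%nat); pose proof (Rsum_nonneg (fun j => Cmod (t j)) (L 0%nat) (fun j => Cmod_ge_0 _)); lra).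
  set (bnd := r * E).
  assert (Hbn : forall N, Cmod (theta_partial ez fz gamma V W beta U k N) <= bnd).
  { intros N. rewrite HP, !Cmod_mult. rewrite Cmod_R, Rabs_pos_eq by lra.
    rewrite Cmod_Ci.
    pose proof (Cmod_Csum t (L N)). specialize (HE N). unfold bnd. nra. }
  assert (Hsq : (- r * b) ^ 2 + (r * a) ^ 2 <= bnd ^ 2).
  { assert (Hl : is_lim_seq (fun N => Re (theta_partial ez fz gamma V W beta U k N) ^ 2 + Im (theta_partial ez fz gamma V W beta U k N) ^ 2)
                   ((- r * b) ^ 2 + (r * a) ^ 2)).
    { apply is_lim_seq_plus'; simpl; (apply is_lim_seq_mult'; [auto|apply is_lim_seq_mult'; [auto|apply is_lim_seq_const]]). }
    assert (Hr2 : forall N, Re (theta_partial ez fz gamma V W beta U k N) ^ 2 + Im (theta_partial ez fz gamma V W beta U k N) ^ 2 <= bnd ^ 2).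
    { intros N. rewrite <- Cmod2_alt. pose proof (Hbn N). pose proof (Cmod_ge_0 (theta_partial ez fz gamma V W beta U k N)).
      apply pow_incr; lra. }
    pose proof (is_lim_seq_le _ _ _ _ Hr2 Hl (is_lim_seq_const (bnd ^ 2))) as Hle. simpl in Hle. exact Hle. }
  assert (HC : Cmod ((- r * b, r * a) : C) <= bnd).
  { pose proof (Cmod2_alt ((- r * b, r * a) : C)) as Hc. simpl Re in Hc; simpl Im in Hc.
    pose proof (Cmod_ge_0 ((- r * b, r * a) : C)). assert (0 <= bnd) by (unfold bnd; nra).
    apply Rsqr_incr_0_var; auto. unfold Rsqr. simpl in Hc, Hsq. nra. }
  eapply Rle_trans; [exact HC|].
  unfold bnd, E, r. pose proof (K_lower kappa_g beta s ltac:(lra) ltac:(lra) Hs1) as HK.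
  set (Kb := Kbeta kappa_g beta s) in *.
  assert (0 <= 16 * U * Xi * D * 432 * / s ^ 2).
  { pose proof (pow_lt s 2). assert (0 < / s^2) by (apply Rinv_0_lt_compat; lra). repeat apply Rmult_le_pos; lra. }
  assert (16 * U * Xi * D * 432 * / s ^ 2 * Rpower (s / 2) beta <= 16 * U * Xi * D * 432 * / s ^ 2 * (Rpower 2 (- beta) * Kb))
    by (apply Rmult_le_compat_l; auto).
  replace (/ s ^ 2 * (16 * U * Xi * D * Rpower (s / 2) beta * 432)) with (16 * U * Xi * D * 432 * / s ^ 2 * Rpower (s / 2) beta) by ring.
  eapply Rle_trans; [exact H0|]. right. unfold s. ring.
Qed.
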